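(* Let $D$ be a drawing in $[0,a]\times[0,b]$ whose nodes are all of the eleven types listed in the context, let $\ell$ be its number of segments, and write $N_\ast$ for the number of nodes of type $\ast$. Then (i) $2\ell=(N_{VE}+N_{VX}+2N_{VT}+3N_{VS}+3N_{VC})+(N_{HE}+N_{HX}+2N_{HT}+3N_{HS}+3N_{HC})+4N_{CR}$; (ii) $N_{VE}+N_{HS}+N_{HT}=N_{VX}+N_{HC}+N_{VT}$ and $N_{HE}+N_{VS}+N_{VT}=N_{HX}+N_{VC}+N_{HT}$.
   Context: A drawing in the box $[0,a]\times[0,b]$ is a finite collection of weighted segments $((x_-,y_-),(x_+,y_+),s)$, each vertical ($x_-=x_+$, $y_-<y_+$, traversed upward) or horizontal ($y_-=y_+$, $x_-<x_+$, traversed rightward), with real intensity $s$, whose endpoints are nodes, satisfying Kirchhoff's law at every interior node (sum of intensities of segments entering from south and west equals sum of those leaving to north and east). Node types: vertical entry (VE): a point $(x,0)$ where a vertical segment starts; vertical exit (VX): a point $(x,b)$ where a vertical segment ends; vertical split (VS): a point where exactly three segments meet, from the south, to the north and to the east; vertical turn (VT): a point where exactly a segment from the south and a segment to the east meet; vertical coalescence (VC): exactly three segments from the west, from the south and to the north; horizontal entry (HE): a point $(0,y)$ where a horizontal segment starts; horizontal exit (HX): a point $(a,y)$ where a horizontal segment ends; horizontal split (HS): exactly three segments, from the west, to the east and to the north; horizontal turn (HT): exactly a segment from the west and a segment to the north; horizontal coalescence (HC): exactly three segments, from the south, from the west and to the east; crossing (CR): four segments meeting (from west, from south, to north, to east).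 *)

(* Defs.v *)
From HB Require Import structures.
From mathcomp Require Import all_boot all_order all_algebra.
From mathcomp Require Import reals.
Set Implicit Arguments. Unset Strict Implicit. Unset Printing Implicit Defensive.
Import Order.TTheory GRing.Theory Num.Theory.
Local Open Scope ring_scope.

Section Drawing.
Variable R : realType.

(* A weighted segment ((x_-,y_-),(x_+,y_+),s). *)
Record segment := Seg { sx1 : R; sy1 : R; sx2 : R; sy2 : R; sint : R }.

Definition seg_start (s : segment) : R * R := (sx1 s, sy1 s).
Definition seg_end (s : segment) : R * R := (sx2 s, sy2 s).

Definition is_vertical (s : segment) : bool := (sx1 s == sx2 s) && (sy1 s < sy2 s).
Definition is_horizontal (s : segment) : bool := (sy1 s == sy2 s) && (sx1 s < sx2 s).

Definition in_box (a b : R) (p : R * R) : bool :=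
  (0 <= p.1 <= a) && (0 <= p.2 <= b).

Definition interior (a b : R) (p : R * R) : bool :=
  (0 < p.1 < a) && (0 < p.2 < b).

Definition nodes (D : seq segment) : seq (R * R) :=
  undup (flatten [seq [:: seg_start s; seg_end s] | s <- D]).

Definition n_from_south (D : seq segment) p :=
  count (fun s => is_vertical s && (seg_end s == p)) D.
Definition n_to_north (D : seq segment) p :=
  count (fun s => is_vertical s && (seg_start s == p)) D.
Definition n_from_west (D : seq segment) p :=
  count (fun s => is_horizontal s && (seg_end s == p)) D.
Definition n_to_east (D : seq segment) p :=
  count (fun s => is_horizontal s && (seg_start s == p)) D.

Definition is_drawing (a b : R) (D : seq segment) : Prop :=
  all (fun s => is_vertical s || is_horizontal s) D /\
  all (fun s => in_box a b (seg_start s) && in_box a b (seg_end s)) D /\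
  (* Kirchhoff's law at interior nodes: inflow (from south and west) = outflow (to north and east) *)
  (forall p, p \in nodes D -> interior a b p ->
     \sum_(s <- D | seg_end s == p) sint s = \sum_(s <- D | seg_start s == p) sint s).

Inductive node_type := VE | VX | VS | VT | VC | HE | HX | HS | HT | HC | CR.

Definition sig4 (D : seq segment) p (i j k l : nat) : bool :=
  [&& n_from_south D p == i, n_to_north D p == j,
      n_from_west D p == k & n_to_east D p == l].

Definition has_type (a b : R) (D : seq segment) (p : R * R) (t : node_type) : bool :=
  match t with
  | VE => (p.2 == 0) && sig4 D p 0 1 0 0
  | VX => (p.2 == b) && sig4 D p 1 0 0 0
  | VS => sig4 D p 1 1 0 1
  | VT => sig4 D p 1 0 0 1
  | VC => sig4 D p 1 1 1 0
  | HE => (p.1 == 0) && sig4 D p 0 0 0 1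
  | HX => (p.1 == a) && sig4 D p 0 0 1 0
  | HS => sig4 D p 0 1 1 1
  | HT => sig4 D p 0 1 1 0
  | HC => sig4 D p 1 0 1 1
  | CR => sig4 D p 1 1 1 1
  end.

Definition Ntype (a b : R) (D : seq segment) (t : node_type) : nat :=
  count (fun p => has_type a b D p t) (nodes D).

End Drawing.

(* Main.v *)
Require Import Defs.
From HB Require Import structures.
From mathcomp Require Import all_boot all_order all_algebra.
From mathcomp Require Import reals.
From mathcomp Require Import zify.
Import Order.TTheory GRing.Theory Num.Theory.

Lemma sum_bool_count (T : Type) (q : pred T) (L : seq T) :
  (\sum_(p <- L) (q p : nat) = count q L)%N.
Proof. by elim: L => [|x L IH]; rewrite ?big_nil ?big_cons ?IH. Qed.

Lemma sum_count_end (T : Type) (U : eqType) (P : pred T) (f : T -> U) (D : seq T) (L : seq U) :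
  uniq L -> all (fun s => f s \in L) D ->
  (\sum_(p <- L) count (fun s => P s && (f s == p)) D = count P D)%N.
Proof.
move=> uL; elim: D => [|s D IH] HD.
  by rewrite big1 // => p _.
move/andP: HD => [fsL HD].
rewrite /= -IH //.
rewrite big_split /=; congr (_ + _)%N.
rewrite sum_bool_count.
case: (P s) => /=; last by rewrite count_pred0.
rewrite (@eq_count _ _ (pred1 (f s))); last by move=> y; rewrite /= eq_sym.
by rewrite (count_uniq_mem _ uL) fsL.
Qed.

Lemma endp_all (T : Type) (U : eqType) (g h : T -> U) (E : seq T) :
  all (fun s => g s \in flatten [seq [:: g s; h s] | s <- E]) E /\
  all (fun s => h s \in flatten [seq [:: g s; h s] | s <- E]) E.
Proof.
elim: E => //= x E [IH1 IH2]; rewrite !inE !eqxx !orbT /=; split.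
- by apply: (sub_all _ IH1) => s /= H; rewrite !inE H !orbT.
- by apply: (sub_all _ IH2) => s /= H; rewrite !inE H !orbT.
Qed.

Section S.
Variable R : realType.
Variables (a b : R) (D : seq (segment R)).

Lemma pt p t : has_type a b D p t ->
  (n_from_south D p = has_type a b D p VX + has_type a b D p VS + has_type a b D p VT
     + has_type a b D p VC + has_type a b D p HC + has_type a b D p CR)%N /\
  (n_to_north D p = has_type a b D p VE + has_type a b D p VS + has_type a b D p VC
     + has_type a b D p HS + has_type a b D p HT + has_type a b D p CR)%N /\
  (n_from_west D p = has_type a b D p HX + has_type a b D p VC + has_type a b D p HS
     + has_type a b D p HT + has_type a b D p HC + has_type a b D p CR)%N /\
  (n_to_east D p = has_type a b D p HE + has_type a b D p VS + has_type a b D p VT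
     + has_type a b D p HS + has_type a b D p HC + has_type a b D p CR)%N.
Proof.
case: t => /=; rewrite /sig4;
  (move=> /andP[E /and4P[/eqP-> /eqP-> /eqP-> /eqP->]] ||
   move=> /and4P[/eqP-> /eqP-> /eqP-> /eqP->]);
  by rewrite /= ?andbF ?E.
Qed.

Lemma endpoints : all (fun s => seg_start s \in nodes D) D /\ all (fun s => seg_end s \in nodes D) D.
Proof.
have [H1 H2] := @endp_all _ _ (@seg_start R) (@seg_end R) D.
by split; [apply: (sub_all _ H1) | apply: (sub_all _ H2)] => s /=; rewrite /nodes mem_undup.
Qed.

Lemma sumtype (F : R * R -> nat) (G : node_type -> nat) :
  (forall p, p \in nodes D -> exists t, has_type a b D p t) ->
  (forall p, p \in nodes D -> F p = \sum_(t <- [:: VE; VX; VS; VT; VC; HE; HX; HS; HT; HC; CR])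
        (G t * has_type a b D p t))%N ->
  (\sum_(p <- nodes D) F p =
     \sum_(t <- [:: VE; VX; VS; VT; VC; HE; HX; HS; HT; HC; CR]) G t * Ntype a b D t)%N.
Proof.
move=> _ HF; rewrite (eq_big_seq _ HF) /= exchange_big /=.
apply: eq_bigr => t _; rewrite -big_distrr /= sum_bool_count //.
Qed.

End S.

Theorem lemma1 (R : realType) (a b : R) (D : seq (segment R)) :
  (0 < a)%R -> (0 < b)%R ->
  is_drawing a b D ->
  (forall p, p \in nodes D -> exists t, has_type a b D p t) ->
  let N := Ntype a b D in
  (2 * size D =
     (N VE + N VX + 2 * N VT + 3 * N VS + 3 * N VC)
   + (N HE + N HX + 2 * N HT + 3 * N HS + 3 * N HC) + 4 * N CR)%N /\
  (N VE + N HS + N HT = N VX + N HC + N VT)%N /\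
  (N HE + N VS + N VT = N HX + N VC + N HT)%N.
Proof.
move=> _ _ [allVH _] Hty N.
have uL : uniq (nodes D) by exact: undup_uniq.
have [Hs He] := @endpoints R D.
have A1 := @sum_count_end _ _ (@is_vertical R) (@seg_end R) D _ uL He.
have A2 := @sum_count_end _ _ (@is_vertical R) (@seg_start R) D _ uL Hs.
have A3 := @sum_count_end _ _ (@is_horizontal R) (@seg_end R) D _ uL He.
have A4 := @sum_count_end _ _ (@is_horizontal R) (@seg_start R) D _ uL Hs.
have Bsz : size D = (count (@is_vertical R) D + count (@is_horizontal R) D)%N.
  rewrite -count_predUI.
  have -> : count (predI (@is_vertical R) (@is_horizontal R)) D = 0%N.
    rewrite (@eq_count _ _ pred0) ?count_pred0 // => s /=.
    rewrite /is_vertical /is_horizontal; apply/negbTE/negP => /andP[/andP[/eqP-> _] /andP[_]].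
    by rewrite ltxx.
  by rewrite addn0; apply/esym/eqP; rewrite -all_count.
have C1 : (\sum_(p <- nodes D) n_from_south D p =
   \sum_(t <- [:: VE; VX; VS; VT; VC; HE; HX; HS; HT; HC; CR])
     ((fun t => match t with VX | VS | VT | VC | HC | CR => 1 | _ => 0 end) t * N t))%N.
  apply: sumtype => // p Hp.
  have [t Ht] := Hty p Hp; have [-> _] := @pt R a b D p t Ht.
  move: (has_type a b D p) => h; clear -h; rewrite !big_cons big_nil /= !mul1n !mul0n !addn0 !add0n; lia.
have C2 : (\sum_(p <- nodes D) n_to_north D p =
   \sum_(t <- [:: VE; VX; VS; VT; VC; HE; HX; HS; HT; HC; CR])
     ((fun t => match t with VE | VS | VC | HS | HT | CR => 1 | _ => 0 end) t * N t))%N.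
  apply: sumtype => // p Hp.
  have [t Ht] := Hty p Hp; have [_ [-> _]] := @pt R a b D p t Ht.
  move: (has_type a b D p) => h; clear -h; rewrite !big_cons big_nil /= !mul1n !mul0n !addn0 !add0n; lia.
have C3 : (\sum_(p <- nodes D) n_from_west D p =
   \sum_(t <- [:: VE; VX; VS; VT; VC; HE; HX; HS; HT; HC; CR])
     ((fun t => match t with HX | VC | HS | HT | HC | CR => 1 | _ => 0 end) t * N t))%N.
  apply: sumtype => // p Hp.
  have [t Ht] := Hty p Hp; have [_ [_ [-> _]]] := @pt R a b D p t Ht.
  move: (has_type a b D p) => h; clear -h; rewrite !big_cons big_nil /= !mul1n !mul0n !addn0 !add0n; lia.
have C4 : (\sum_(p <- nodes D) n_to_east D p =
   \sum_(t <- [:: VE; VX; VS; VT; VC; HE; HX; HS; HT; HC; CR])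
     ((fun t => match t with HE | VS | VT | HS | HC | CR => 1 | _ => 0 end) t * N t))%N.
  apply: sumtype => // p Hp.
  have [t Ht] := Hty p Hp; have [_ [_ [_ ->]]] := @pt R a b D p t Ht.
  move: (has_type a b D p) => h; clear -h; rewrite !big_cons big_nil /= !mul1n !mul0n !addn0 !add0n; lia.
rewrite /n_from_south /n_to_north /n_from_west /n_to_east A1 A2 A3 A4 in C1 C2 C3 C4.
rewrite !big_cons !big_nil /= !mul1n !mul0n !addn0 !add0n in C1 C2 C3 C4.
rewrite Bsz; move: C1 C2 C3 C4; rewrite /N.
move: (count _ D) (count _ D) (Ntype a b D) => x y M.
clear; lia.
Qed.
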